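(* Let $s,t$ be real numbers with $t\ge s>0$, and define $K_0=1$, $K_1=t$, $K_2=t^2$, and $K_n = tK_{n-1}+s^2K_{n-2}$ for $n\ge 3$. Then $K_n \le M_n$ for every integer $n\ge 0$.
   Context: For a real number $s$, a positive integer $n$ and a set $P \subseteq \mathbb{R}$, $\mathcal{G}_s^{n\times n}(P)$ denotes the set of all $n\times n$ real upper Hessenberg matrices $A=(a_{ij})$ with $a_{i+1,i} = s$ for $1\le i\le n-1$, $a_{ij}=0$ for $i > j+1$, and $a_{ij}\in P$ for all $i \le j$. For $n\ge 1$, $M_n$ is the maximum of $|\det A|$ over $A\in\mathcal{G}_s^{n\times n}([0,t])$, and $M_0 := 1$. *)

(* Defs.v *)
From HB Require Import structures.
From mathcomp Require Import all_boot all_order all_algebra.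
From mathcomp Require Import classical_sets reals.
Set Implicit Arguments. Unset Strict Implicit. Unset Printing Implicit Defensive.
Import Order.TTheory GRing.Theory Num.Theory.
Local Open Scope classical_set_scope.
Local Open Scope ring_scope.

Definition hessG (R : realType) (n : nat) (s : R) (P : set R) : set 'M[R]_n :=
  [set A | forall i j : 'I_n,
     ((i : nat) = j.+1 -> A i j = s) /\
     ((j.+1 < i)%N -> A i j = 0) /\
     ((i <= j)%N -> P (A i j))].

(* M_n = max |det A| over A in G_s^{n x n}([0,t]) (taken as the supremum,
   which is attained since the set is compact and nonempty); M_0 = 1. *)
Definition Mn (R : realType) (s t : R) (n : nat) : R :=
  if n is 0 then 1
  else sup [set `|\det A| | A in @hessG R n s [set x : R | 0 <= x <= t]].

Fixpoint Kn (R : realType) (s t : R) (n : nat) {struct n} : R :=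
  match n with
  | 0 => 1
  | n0.+1 =>
    match n0 with
    | 0 => t
    | n1.+1 =>
      match n1 with
      | 0 => t ^+ 2
      | _.+1 => t * Kn s t n0 + s ^+ 2 * Kn s t n1
      end
    end
  end.

(* Main.v *)
Require Import Defs.
From HB Require Import structures.
From mathcomp Require Import all_boot all_order all_algebra.
From mathcomp Require Import classical_sets reals.
From mathcomp Require Import fingroup perm.
Import Order.TTheory GRing.Theory Num.Theory.
Local Open Scope ring_scope.
Set Implicit Arguments. Unset Strict Implicit.

Section Aux.
Variables (R : realType) (s t : R).

Definition ff (i j : nat) : R :=
  if (i <= j)%N then (if odd (j - i) then 0 else t)
  else if i == j.+1 then s else 0.

Lemma ffS i j : ff i.+1 j.+1 = ff i j.
Proof. by rewrite /ff ltnS subSS eqSS. Qed.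

Lemma ff0 l : ff 0 l.+2 = ff 0 l.
Proof. by rewrite /ff !subn0 /= negbK. Qed.

Definition TT n : 'M[R]_n := \matrix_(i < n, j < n) ff i j.

Lemma TT_top n : row' ord0 (col' ord0 (TT n.+1)) = TT n.
Proof. by apply/matrixP => i j; rewrite !mxE /= ffS. Qed.

Lemma TT_rec n : \det (TT n.+2) =
  t * \det (TT n.+1) - s * \det (row' (lift ord0 ord0) (col' ord0 (TT n.+2))).
Proof.
rewrite (expand_det_col _ ord0) !big_ord_recl big1 ?addr0; last first.
  by move=> i _; rewrite !mxE /= /ff /= mul0r.
rewrite /cofactor TT_top !mxE /= /ff /= expr0 mul1r.
rewrite expr1 mulN1r mulrN; congr (_ - _).
Qed.

Lemma TT_B m : \det (row' (lift ord0 ord0) (col' ord0 (TT m.+3)))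
   = - s * \det (TT m.+1).
Proof.
set B := row' _ _.
rewrite (expand_det_col _ ord0) !big_ord_recl big1 ?addr0; last first.
  by move=> i _; rewrite !mxE /= /ff /= mul0r.
rewrite !mxE /= /ff /= mul0r add0r /cofactor /= expr1 mulN1r mulrN -mulNr.
congr (_ * \det _); apply/matrixP => i j; rewrite !mxE /=.
case: i => [[|k] Hk] /=; first by rewrite ff0.
by rewrite /bump /= !add1n !ffS.
Qed.

Lemma TT_det n : \det (TT n) = Kn s t n.
Proof.
elim: n {-2}n (leqnn n) => [|N IH] n Hn.
  by rewrite leqn0 in Hn; move/eqP: Hn => ->; rewrite det_mx00.
case: n Hn => [|[|[|m]]] Hn.
- by rewrite det_mx00.
- rewrite (expand_det_col _ ord0) big_ord1 /cofactor det_mx00 !mxE /ff /=.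
  by rewrite mulr1 expr0 mulr1.
- rewrite TT_rec.
  have -> : row' (lift ord0 ord0) (col' ord0 (TT 2)) = 0.
    apply/matrixP => i j; rewrite !mxE /=.
    by case: i => [[|k] Hk] //; case: j => [[|l] Hl].
  rewrite det0 mulr0 subr0.
  rewrite (expand_det_col _ ord0) big_ord1 /cofactor det_mx00 !mxE /ff /=.
  by rewrite expr0 !mulr1 expr2.
- rewrite ltnS in Hn; have h2 : (m.+1 <= N)%N by apply: ltnW.
  rewrite TT_rec TT_B /= !IH //.
  by rewrite mulNr mulrN opprK mulrA -expr2.
Qed.

Lemma Kn_ge0 n : 0 <= t -> 0 <= Kn s t n.
Proof.
move=> t0; elim: n {-2}n (leqnn n) => [|N IH] n Hn.
  by rewrite leqn0 in Hn; move/eqP: Hn => ->.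
case: n Hn => [|[|[|m]]] Hn //.
- by rewrite /= exprn_ge0.
- rewrite ltnS in Hn; have h2 : (m.+1 <= N)%N by apply: ltnW.
  have -> : Kn s t m.+3 = t * Kn s t m.+2 + s ^+ 2 * Kn s t m.+1 by [].
  by rewrite addr_ge0 // mulr_ge0 ?sqr_ge0 ?IH.
Qed.

End Aux.

Theorem lemma3p6 (R : realType) (s t : R) :
  0 < s -> s <= t -> forall n : nat, Kn s t n <= Mn s t n.
Proof.
move=> s0 st n; have t0 : 0 <= t by apply: le_trans st; apply: ltW.
case: n => [|n] //=.
have mem : @hessG R n.+1 s [set x : R | 0 <= x <= t] (TT s t n.+1).
  move=> i j; rewrite !mxE /ff; split; [|split].
  - by move=> ->; rewrite ltnn eqxx.
  - by move=> H; rewrite leqNgt (ltnW H) /= gtn_eqF.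
  - by move=> ->; case: odd => /=; rewrite ?lexx ?t0.
apply: (@le_trans _ _ `|\det (TT s t n.+1)|).
  by rewrite TT_det ger0_norm ?Kn_ge0.
apply: ub_le_sup; last by exists (TT s t n.+1).
exists (\sum_(p : 'S_n.+1) t ^+ n.+1) => _ [A HA <-].
rewrite /determinant (le_trans (ler_norm_sum _ _ _)) //.
apply: ler_sum => p _; rewrite normrM normrX normrN normr1 expr1n mul1r.
have -> : t ^+ n.+1 = \prod_(i < n.+1) t by rewrite prodr_const card_ord.
rewrite normr_prod.
apply: ler_prod => i _; rewrite normr_ge0 /=.
have [H1 [H2 H3]] := HA i (p i).
case: (ltngtP i (p i)) => H.
- by have /andP[a b] := H3 (ltnW H); rewrite ger0_norm.
- case: (ltngtP i (p i).+1) => H'.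
  + by move: H; rewrite ltnNge -ltnS H'.
  + by rewrite H2 // normr0.
  + by rewrite H1 // gtr0_norm.
- by have /andP[a b] := H3 (eq_leq H); rewrite ger0_norm.
Qed.
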